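(* Let $S$ be a surface, $\phi:S\to\mathbf{Ein}^{1,1}$ an immersion with $\phi^*\tau$ trivial, $g$ a $C^2$ Lorentz metric on $S$ compatible with the induced split structure, $\sigma$ an isotropic surface with $[\sigma]=\phi$ and $g(u,v)=\langle\mathrm D_u\sigma,\mathrm D_v\sigma\rangle$, and $\eta$ its dual isotropic surface. Let $\psi=(\frac{\sqrt2}{2}(\sigma-\eta),\frac{\sqrt2}{2}(\sigma+\eta))$ be the $g$-Epstein surface and $\pi$ the projection to the base point. Then $\pi\circ\psi=\frac{\sqrt2}{2}(\sigma-\eta)$ is an envelope of the family of horospheres $\mathcal H(g)=\{H(\sigma(s)):s\in S\}$, i.e. for every $s\in S$, $\pi\circ\psi(s)\in H(\sigma(s))$ and $\mathrm d_s(\pi\circ\psi)(\mathsf T_sS)\subset\mathsf T_{\pi\circ\psi(s)}H(\sigma(s))$.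
   Context: $W$ is a real $4$-dimensional vector space with a quadratic form of signature $(2,2)$ and polar form $\langle\cdot,\cdot\rangle$; $\mathbf H^{2,1}_+=\{x:\langle x,x\rangle=-1\}$, $\mathbf{Ein}^{1,1}=\{[x]\in\mathbf P(W):\langle x,x\rangle=0\}$ with tautological line bundle $\tau$ and canonical split structure given (via a Segre identification with $\mathbf{RP}^1\times\mathbf{RP}^1$) by the fibers of the two projections; compatible metrics have these leaves isotropic with the positivity convention on oriented split bases. An isotropic surface is an immersion $\sigma:S\to W$ with $\langle\sigma,\sigma\rangle=0$ and $\sigma(s)$ transverse to the image of $\mathsf T_s\sigma$; its dual $\eta$ satisfies $\langle\eta,\sigma\rangle=1$, $\langle\eta,\eta\rangle=0$, $\langle\eta,\mathrm D_u\sigma\rangle=0$. For a nonzero isotropic vector $x_0\in W$, the horosphere is $H(x_0)=\{p\in\mathbf H^{2,1}_+:\langle x_0,p\rangle=-\frac{\sqrt2}{2}\}$, whose tangent space at $p$ is $\operatorname{span}\{x_0,p\}^\perp$. *)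

(* Defs.v *)
From HB Require Import structures.
From mathcomp Require Import all_boot all_order all_algebra.
From mathcomp Require Import all_classical all_reals all_analysis.
Set Implicit Arguments. Unset Strict Implicit. Unset Printing Implicit Defensive.
Import Order.TTheory GRing.Theory Num.Theory.
Import numFieldNormedType.Exports.
Local Open Scope classical_set_scope.
Local Open Scope ring_scope.

(* Model of W: W = R^2 (x) R^2 = 'M[R]_2 with quadratic form \det
   (signature (2,2)); the Segre map RP^1 x RP^1 -> Ein^{1,1} is
   ([a],[b]) |-> [a b^T].  Surfaces are modelled on an open set
   U of R^2 = 'rV[R]_2 (a chart), with its standard orientation. *)

Definition W (R : realType) := 'M[R]_2.

Definition bil (R : realType) (x y : 'M[R]_2) : R :=
  (\det (x + y) - \det x - \det y) / 2.

Definition hyp (R : realType) : set 'M[R]_2 := [set x | bil x x = -1].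

Definition horosphere (R : realType) (x0 : 'M[R]_2) : set 'M[R]_2 :=
  [set p | hyp p /\ bil x0 p = - (Num.sqrt 2 / 2)].

Definition horo_tangent (R : realType) (x0 p : 'M[R]_2) : set 'M[R]_2 :=
  [set v | bil x0 v = 0 /\ bil p v = 0].

Fixpoint Ck (R : realType) (V : normedModType R) (k : nat)
    (U : set 'rV[R]_2) (f : 'rV[R]_2 -> V) : Prop :=
  match k with
  | 0 => {in U, continuous f}
  | k'.+1 => (forall s, U s -> differentiable f s) /\
             (forall v : 'rV[R]_2, Ck k' U (fun s => 'D_v f s))
  end.

Definition isotropic_surface (R : realType) (U : set 'rV[R]_2)
    (sigma : 'rV[R]_2 -> 'M[R]_2) : Prop :=
  forall s, U s ->
    [/\ differentiable sigma s,
        (forall u, 'D_u sigma s = 0 -> u = 0),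
        bil (sigma s) (sigma s) = 0 &
        (forall u, 'D_u sigma s <> sigma s)].

Definition dual_surface (R : realType) (U : set 'rV[R]_2)
    (sigma eta : 'rV[R]_2 -> 'M[R]_2) : Prop :=
  forall s, U s ->
    [/\ bil (eta s) (sigma s) = 1, bil (eta s) (eta s) = 0 &
        (forall u, bil (eta s) ('D_u sigma s) = 0)].

Definition induced_metric (R : realType) (sigma : 'rV[R]_2 -> 'M[R]_2)
    (s u v : 'rV[R]_2) : R := bil ('D_u sigma s) ('D_v sigma s).

Definition e1 {R : realType} : 'rV[R]_2 := \row_j (j == ord0)%:R.
Definition e2 {R : realType} : 'rV[R]_2 := \row_j (j == ord_max)%:R.

Definition C2_lorentz (R : realType) (U : set 'rV[R]_2)
    (g : 'rV[R]_2 -> 'rV[R]_2 -> 'rV[R]_2 -> R) : Prop :=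
  (forall u v, Ck 2 U (fun s => g s u v)) /\
  (forall s, U s -> g s e1 e1 * g s e2 e2 - g s e1 e2 ^+ 2 < 0).

(* split structure on S induced by phi = [sigma] through the Segre
   identification: leaf1 = fibres of the first projection ([a] constant:
   columns of D_u sigma in the column space of sigma(s)), leaf2 = fibres of
   the second projection ([b] constant: rows in the row space). *)
Definition leaf1 (R : realType) (sigma : 'rV[R]_2 -> 'M[R]_2) (s u : 'rV[R]_2)
  : Prop := (('D_u sigma s)^T <= (sigma s)^T)%MS.
Definition leaf2 (R : realType) (sigma : 'rV[R]_2 -> 'M[R]_2) (s u : 'rV[R]_2)
  : Prop := ('D_u sigma s <= sigma s)%MS.

Definition det2 (R : realType) (u v : 'rV[R]_2) : R :=
  u ord0 ord0 * v ord0 ord_max - u ord0 ord_max * v ord0 ord0.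

Definition compatible (R : realType) (U : set 'rV[R]_2)
    (sigma : 'rV[R]_2 -> 'M[R]_2)
    (g : 'rV[R]_2 -> 'rV[R]_2 -> 'rV[R]_2 -> R) : Prop :=
  forall s, U s ->
    [/\ (forall u, leaf1 sigma s u -> g s u u = 0),
        (forall u, leaf2 sigma s u -> g s u u = 0) &
        (forall u v, leaf1 sigma s u -> leaf2 sigma s v -> 0 < det2 u v ->
            0 < g s u v)].

Definition epstein (R : realType) (sigma eta : 'rV[R]_2 -> 'M[R]_2)
    (s : 'rV[R]_2) : 'M[R]_2 * 'M[R]_2 :=
  ((Num.sqrt 2 / 2) *: (sigma s - eta s), (Num.sqrt 2 / 2) *: (sigma s + eta s)).

Definition base_pt {R : realType} (x : 'M[R]_2 * 'M[R]_2) : 'M[R]_2 := x.1.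

(* Main.v *)
Require Import Defs.
From HB Require Import structures.
From mathcomp Require Import all_boot all_order all_algebra.
From mathcomp Require Import all_classical all_reals all_analysis.
From mathcomp Require Import ring.
Import Order.TTheory GRing.Theory Num.Theory.
Import numFieldNormedType.Exports.
Local Open Scope classical_set_scope.
Local Open Scope ring_scope.
Set Implicit Arguments. Unset Strict Implicit.

Lemma det22 (R : realType) (x : 'M[R]_2) :
  \det x = x 0 0 * x 1 1 - x 0 1 * x 1 0.
Proof.
rewrite (expand_det_row _ 0) !big_ord_recl big_ord0 /cofactor !det_mx11 /=.
rewrite !mxE /= expr0 expr1 !mul1r mulN1r addr0.
have -> : lift (0:'I_2) (0:'I_1) = 1 by apply/val_inj.
have -> : (ord0:'I_2) = 0 by apply/val_inj.
have -> : lift (1:'I_2) (0:'I_1) = 0 by apply/val_inj.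
by rewrite mulrN.
Qed.

Definition BB (R : realType) (x y : 'M[R]_2) : R :=
  x 0 0 * y 1 1 + y 0 0 * x 1 1 - x 0 1 * y 1 0 - y 0 1 * x 1 0.

Lemma bilE (R : realType) (x y : 'M[R]_2) : bil x y = BB x y / 2.
Proof. by rewrite /bil !det22 /BB !mxE; ring. Qed.

Lemma BBC (R : realType) (x y : 'M[R]_2) : BB x y = BB y x.
Proof. by rewrite /BB; ring. Qed.

Lemma entry_derive (R : realType) (f : 'rV[R]_2 -> 'M[R]_2) s u i j :
  derivable f s u -> is_derive s u (fun x => f x i j) ('D_u f s i j).
Proof.
move=> df; have dij := (derivable_mxP f s u).1 df i j.
rewrite derive_mx // mxE; exact: derivableP.
Qed.

Lemma BB_derive (R : realType) (f g : 'rV[R]_2 -> 'M[R]_2) s u :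
  derivable f s u -> derivable g s u ->
  is_derive s u (fun x => BB (f x) (g x)) (BB ('D_u f s) (g s) + BB (f s) ('D_u g s)).
Proof.
move=> df dg.
pose F i j := fun x => f x i j.
pose G i j := fun x => g x i j.
have -> : (fun x => BB (f x) (g x)) =
  F 0 0 * G 1 1 + G 0 0 * F 1 1 - F 0 1 * G 1 0 - G 0 1 * F 1 0.
  by apply: funext => x.
have hF i j : is_derive s u (F i j) ('D_u f s i j) by exact: entry_derive.
have hG i j : is_derive s u (G i j) ('D_u g s i j) by exact: entry_derive.
apply: is_derive_eq.
rewrite /BB /F /G /GRing.scale /=.
ring.
Qed.

Lemma BB_const (R : realType) (f g : 'rV[R]_2 -> 'M[R]_2) s u (c : R) :
  derivable f s u -> derivable g s u ->
  (\forall x \near s, BB (f x) (g x) = c) ->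
  BB ('D_u f s) (g s) + BB (f s) ('D_u g s) = 0.
Proof.
move=> df dg nc.
have h := BB_derive df dg.
rewrite -(@derive_val _ _ _ _ _ _ _ h).
rewrite (@near_eq_derive _ _ _ _ (cst c) s u nc).
exact: derive_cst.
Qed.

Theorem mainTheorem16 (R : realType) (U : set 'rV[R]_2)
    (sigma eta : 'rV[R]_2 -> 'M[R]_2) :
  open U ->
  isotropic_surface U sigma ->
  C2_lorentz U (induced_metric sigma) ->
  compatible U sigma (induced_metric sigma) ->
  dual_surface U sigma eta ->
  (forall s, U s -> differentiable eta s) ->
  forall s, U s ->
    horosphere (sigma s) ((base_pt \o epstein sigma eta) s) /\
    forall u : 'rV[R]_2,
      horo_tangent (sigma s) ((base_pt \o epstein sigma eta) s)
        ('D_u (base_pt \o epstein sigma eta) s).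
Proof.
move=> oU iso _ _ dual deta s Us.
have nU : \forall x \near s, U x.
  by move: oU; rewrite openE => /(_ s Us).
have [dsig _ ss0 _] := iso s Us.
have [es1 ee0 esD] := dual s Us.
pose c : R := Num.sqrt 2 / 2.
have c2 : c * c = 1 / 2.
  rewrite /c mulrA -[Num.sqrt 2 / 2 * _]mulrA (mulrC _ (Num.sqrt 2)) mulrA.
  rewrite -expr2 sqr_sqrtr ?ler0n //.
  by field.
have Ess : BB (sigma s) (sigma s) = 0.
  by move: ss0; rewrite bilE => /eqP; rewrite mulf_eq0 invr_eq0 pnatr_eq0 orbF => /eqP.
have Eee : BB (eta s) (eta s) = 0.
  by move: ee0; rewrite bilE => /eqP; rewrite mulf_eq0 invr_eq0 pnatr_eq0 orbF => /eqP.
have Ees : BB (eta s) (sigma s) = 2.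
  by move: es1; rewrite bilE => /(congr1 (fun t => t * 2)); rewrite mul1r divfK // pnatr_eq0.
have base : (base_pt \o epstein sigma eta) = c \*: (sigma - eta).
  by apply: funext.
rewrite base /=.
split.
  split.
    rewrite /hyp /= bilE.
    have -> : BB (c *: (sigma s - eta s)) (c *: (sigma s - eta s)) =
      (c * c) * (BB (sigma s) (sigma s) - (BB (eta s) (sigma s) + BB (eta s) (sigma s))
                 + BB (eta s) (eta s)).
      by rewrite /BB !mxE; ring.
    by rewrite Ess Eee Ees c2; field.
  rewrite bilE.
  have -> : BB (sigma s) (c *: (sigma s - eta s)) =
      c * (BB (sigma s) (sigma s) - BB (eta s) (sigma s)).
    by rewrite /BB !mxE; ring.
  by rewrite Ess Ees /c; field.
move=> u.
have ds : derivable sigma s u by exact: diff_derivable.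
have de : derivable eta s u by exact/diff_derivable/deta.
rewrite deriveZ; last exact: derivableB.
rewrite deriveB //.
set Ds := 'D_u sigma s; set De := 'D_u eta s.
have h1 : BB Ds (sigma s) + BB (sigma s) Ds = 0.
  apply: (@BB_const _ sigma sigma s u 0) => //.
  near=> x; have Ux : U x by near: x.
  have [_ _ h _] := iso x Ux.
  by move: h; rewrite bilE => /eqP; rewrite mulf_eq0 invr_eq0 pnatr_eq0 orbF => /eqP.
have h2 : BB De (eta s) + BB (eta s) De = 0.
  apply: (@BB_const _ eta eta s u 0) => //.
  near=> x; have Ux : U x by near: x.
  have [_ h _] := dual x Ux.
  by move: h; rewrite bilE => /eqP; rewrite mulf_eq0 invr_eq0 pnatr_eq0 orbF => /eqP.
have h3 : BB De (sigma s) + BB (eta s) Ds = 0.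
  apply: (@BB_const _ eta sigma s u 2) => //.
  near=> x; have Ux : U x by near: x.
  have [h _ _] := dual x Ux.
  by move: h; rewrite bilE => /(congr1 (fun t => t * 2)); rewrite mul1r divfK // pnatr_eq0.
have h4 : BB (eta s) Ds = 0.
  by move: (esD u); rewrite bilE => /eqP; rewrite mulf_eq0 invr_eq0 pnatr_eq0 orbF => /eqP.
have h1' : BB (sigma s) Ds = 0.
  by move: h1; rewrite BBC -mulr2n => /eqP; rewrite mulrn_eq0 /= => /eqP.
have h2' : BB (eta s) De = 0.
  by move: h2; rewrite BBC -mulr2n => /eqP; rewrite mulrn_eq0 /= => /eqP.
have h3' : BB (sigma s) De = 0.
  by move: h3; rewrite h4 addr0 BBC.
split.
  rewrite bilE.
  have -> : BB (sigma s) (c *: (Ds - De)) = c * (BB (sigma s) Ds - BB (sigma s) De).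
    by rewrite /BB !mxE; ring.
  by rewrite h1' h3' subrr mulr0 mul0r.
rewrite bilE.
have -> : BB (c *: (sigma s - eta s)) (c *: (Ds - De)) =
   (c * c) * (BB (sigma s) Ds - BB (sigma s) De - BB (eta s) Ds + BB (eta s) De).
  by rewrite /BB !mxE; ring.
by rewrite h1' h3' h4 h2' !subrr !add0r mulr0 mul0r.
Unshelve. all: by end_near.
Qed.
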